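(* Let $n\ge1$, $i\ge1$ be integers and let $A$, $B$, $C$ be the functions on $D^*$ described in the context, with $\|A\|_D,\|B\|_D,\|C\|_D$ finite. For $(x,y)\in D^*$ let $\widehat{DT}(x,y)=\begin{pmatrix}A(x,y)&B(x,y)\\ C(x,y)&1\end{pmatrix}$, an $(n+1)\times(n+1)$ matrix, and let $M^i:L^i(\mathbb{R}^{n+1},\mathbb{R}^n)\to L^i(\mathbb{R}^{n+1},\mathbb{R}^n)$ be given by $M^i(b)(x_1,\dots,x_i)=b(\widehat{DT}(x,y)x_1,\dots,\widehat{DT}(x,y)x_i)$. Then the space $L^i(\mathbb{R}^{n+1},\mathbb{R}^n)$ can be endowed with a norm $|\cdot|_i$ equivalent to the operator norm $\|\cdot\|$ such that for every nonzero $b$, $$\frac{|M^i(b)|_i}{|b|_i}\le\max_{\substack{m,n'\in\mathbb{N}\\ m+n'=i}}\big\{(\|A\|_D+\|B\|_D)^m(\|C\|_D+1)^{n'}\big\}.$$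
   Context: $\|\cdot\|$ is a norm on $\mathbb{R}^n$, with induced operator norms; $L^i(\mathbb{R}^{n+1},\mathbb{R}^n)$ denotes continuous $i$-linear maps from $(\mathbb{R}^{n+1})^i$ to $\mathbb{R}^n$. $D=\{(x,y)\in\mathbb{R}^n\times\mathbb{R}:\|x\|\le1,|y|\le1\}$, $D_0=\{(x,0)\in D\}$, $D^*=D\setminus D_0$. $T=(F,G):D^*\to D$ with $F,G$ differentiable on $D^*$ and $\partial_yG$ nonvanishing on $D^*$; $A=\partial_xF(\partial_yG)^{-1}$ (an $n\times n$ matrix), $B=\partial_yF(\partial_yG)^{-1}$ (an $n$-column), $C=\partial_xG(\partial_yG)^{-1}$ (an $n$-row), and $\|M\|_D=\sup_{(x,y)\in D^*}\|M(x,y)\|$. *)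

(* Defs.v *)
From HB Require Import structures.
From mathcomp Require Import all_boot all_order all_algebra.
From mathcomp Require Import all_classical all_reals all_analysis.
Set Implicit Arguments. Unset Strict Implicit. Unset Printing Implicit Defensive.
Import Order.TTheory GRing.Theory Num.Theory.
Import numFieldNormedType.Exports.
Local Open Scope classical_set_scope.
Local Open Scope ring_scope.

Section Defs.
Variable R : realType.

Definition is_norm (n : nat) (nrm : 'cV[R]_n -> R) : Prop :=
  [/\ forall u, nrm u = 0 -> u = 0,
      forall (a : R) u, nrm (a *: u) = `|a| * nrm u &
      forall u v, nrm (u + v) <= nrm u + nrm v].

Definition Dset (n : nat) (nrm : 'cV[R]_n -> R) : set ('cV[R]_n * R) :=
  [set p | nrm p.1 <= 1 /\ `|p.2| <= 1].
Definition Dstar (n : nat) (nrm : 'cV[R]_n -> R) : set ('cV[R]_n * R) :=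
  [set p | Dset nrm p /\ p.2 != 0].

Definition opnorm_sq (n : nat) (nrm : 'cV[R]_n -> R) (A : 'M[R]_n) : R :=
  sup [set nrm (A *m u) | u in [set u | nrm u <= 1]].
Definition opnorm_row (n : nat) (nrm : 'cV[R]_n -> R) (C : 'rV[R]_n) : R :=
  sup [set `|(C *m u) 0 0| | u in [set u | nrm u <= 1]].

Definition supD (n : nat) (nrm : 'cV[R]_n -> R) (f : 'cV[R]_n * R -> R) : R :=
  sup [set f p | p in Dstar nrm].
Definition finiteD (n : nat) (nrm : 'cV[R]_n -> R) (f : 'cV[R]_n * R -> R) : Prop :=
  has_ubound [set f p | p in Dstar nrm].

Definition dxF (n : nat) (F : 'cV[R]_n * R -> 'cV[R]_n) (p : 'cV[R]_n * R) : 'M[R]_n :=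
  \matrix_(r, c) ('d F p (delta_mx c 0, 0)) r 0.
Definition dyF (n : nat) (F : 'cV[R]_n * R -> 'cV[R]_n) (p : 'cV[R]_n * R) : 'cV[R]_n :=
  'd F p (0, 1).
Definition dxG (n : nat) (G : 'cV[R]_n * R -> R) (p : 'cV[R]_n * R) : 'rV[R]_n :=
  \row_c ('d G p (delta_mx c 0, 0)).
Definition dyG (n : nat) (G : 'cV[R]_n * R -> R) (p : 'cV[R]_n * R) : R :=
  'd G p (0, 1).

Definition Amat n F G p : 'M[R]_n := (dyG G p)^-1 *: dxF F p.
Definition Bvec n F G p : 'cV[R]_n := (dyG G p)^-1 *: dyF F p.
Definition Crow n (G : 'cV[R]_n * R -> R) p : 'rV[R]_n := (dyG G p)^-1 *: dxG G p.

Definition DThat n F G p : 'M[R]_(n + 1) :=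
  block_mx (Amat F G p) (Bvec F G p) (Crow G p) 1.

Definition multilinear (n m i : nat) (b : ('I_i -> 'cV[R]_m) -> 'cV[R]_n) : Prop :=
  forall (xs : 'I_i -> 'cV[R]_m) (k : 'I_i) (a : R) (u v : 'cV[R]_m),
    b (fun j => if j == k then a *: u + v else xs j)
    = a *: b (fun j => if j == k then u else xs j)
      + b (fun j => if j == k then v else xs j).

Definition nrm_ext (n : nat) (nrm : 'cV[R]_n -> R) (w : 'cV[R]_(n + 1)) : R :=
  Num.max (nrm (usubmx w)) `|dsubmx w 0 0|.

Definition mlnorm (n i : nat) (nrm : 'cV[R]_n -> R)
  (b : ('I_i -> 'cV[R]_(n + 1)) -> 'cV[R]_n) : R :=
  sup [set nrm (b xs) | xs in [set xs | forall k, nrm_ext nrm (xs k) <= 1]].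

Definition Mi n i F G p (b : ('I_i -> 'cV[R]_(n + 1)) -> 'cV[R]_n)
  : ('I_i -> 'cV[R]_(n + 1)) -> 'cV[R]_n :=
  fun xs => b (fun k => DThat F G p *m xs k).

End Defs.

(* Main.v *)
Require Import Defs.
From HB Require Import structures.
From mathcomp Require Import all_boot all_order all_algebra.
From mathcomp Require Import all_classical all_reals all_analysis.
From mathcomp Require Import lra.
Import Order.TTheory GRing.Theory Num.Theory.
Import numFieldNormedType.Exports.
Local Open Scope classical_set_scope.
Local Open Scope ring_scope.


Set Implicit Arguments.
Section S.
Variable R : realType.

Lemma entry_le_norm m n (x : 'M[R]_(m, n)) i j : `|x i j| <= `|x|.
Proof.
rewrite [X in _ <= X]/Num.norm /= mx_normrE.
exact: (le_bigmax _ _ (i, j)).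
Qed.

Variable m : nat.
Variable nu : 'cV[R]_m -> R.
Hypothesis Hnu : is_norm nu.

Lemma nu0 : nu 0 = 0.
Proof. case: Hnu => _ hZ _; by rewrite -(scale0r (0 : 'cV[R]_m)) hZ normr0 mul0r. Qed.

Lemma nuN u : nu (- u) = nu u.
Proof. case: Hnu => _ hZ _; by rewrite -scaleN1r hZ normrN normr1 mul1r. Qed.

Lemma nu_ge0 u : 0 <= nu u.
Proof.
case: Hnu => _ _ hD.
have := hD u (- u); rewrite subrr nu0 nuN => h.
by rewrite -(@pmulr_rge0 _ 2) // mulr2n mulrDl mul1r.
Qed.

Lemma nu_eq0 u : (nu u == 0) = (u == 0).
Proof.
case: Hnu => h0 _ _; apply/eqP/eqP => [/h0 //|->]; exact: nu0.
Qed.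

Lemma nu_sum (I : Type) (r : seq I) (P : pred I) (F : I -> 'cV[R]_m) :
  nu (\sum_(j <- r | P j) F j) <= \sum_(j <- r | P j) nu (F j).
Proof.
case: Hnu => _ _ hD.
elim/big_ind2: _ => [|x1 x2 y1 y2 h1 h2|j _]; first by rewrite nu0.
  by apply: le_trans (hD _ _) _; apply: lerD.
done.
Qed.

Lemma vec_expand (u : 'cV[R]_m) : u = \sum_(c < m) u c 0 *: delta_mx c 0.
Proof.
rewrite {1}(matrix_sum_delta u); apply: eq_bigr => c _.
by rewrite big_ord1.
Qed.

Lemma nu_upper u : nu u <= \sum_(c < m) `|u c 0| * nu (delta_mx c 0).
Proof.
case: Hnu => _ hZ _.
rewrite {1}(vec_expand u). apply: le_trans; first exact: nu_sum.
by apply: ler_sum => c _; rewrite hZ.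
Qed.
End S.

Section S2.
Variable R : realType.
Variable m : nat.
Variable nu : 'cV[R]_m -> R.
Hypothesis Hnu : is_norm nu.

Lemma nu_lower : exists K : R, 0 < K /\ forall (u : 'cV[R]_m) (c : 'I_m), `|u c 0| <= K * nu u.
Proof.
have [h0 hZ hD] := Hnu.
set Mx := \sum_(c < m) nu (delta_mx c 0).
have Mx0 : 0 <= Mx by apply: sumr_ge0 => c _; exact: nu_ge0.
pose h := fun v : 'rV[R]_m => nu (v^T).
have hlip : forall v w, h v <= h w + Mx * `|v - w|.
  move=> v w; rewrite /h.
  have -> : v^T = w^T + (v - w)^T by rewrite linearB /= addrC subrK.
  apply: le_trans; first exact: hD. rewrite lerD2l.
  apply: le_trans; first exact: nu_upper.
  rewrite /Mx big_distrl /=; apply: ler_sum => c _.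
  rewrite [X in _ <= X]mulrC; apply: ler_wpM2r; first exact: nu_ge0.
  by rewrite mxE; apply: entry_le_norm.
have hcont : continuous h.
  move=> v; apply/(@cvgrPdist_lt _ _ _ _ (nbhs_filter v)) => e e0.
  have e1 : 0 < e / (Mx + 1) by rewrite divr_gt0 // ltr_wpDl.
  apply/nbhs_ballP; exists (e / (Mx + 1)) => // t; rewrite -ball_normE /= => tv.
  have hb : `|h v - h t| <= Mx * `|v - t|.
    rewrite ler_norml; apply/andP; split.
      by have := hlip t v; rewrite distrC => ?; lra.
    by have := hlip v t; lra.
  apply: le_lt_trans hb _.
  apply: (@le_lt_trans _ _ ((Mx + 1) * `|v - t|)).
    by apply: ler_wpM2r => //; rewrite lerDl.
  by rewrite mulrC -ltr_pdivlMr // ltr_wpDl.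
pose S := [set v : 'rV[R]_m | `|v| = 1].
have Sc : compact S.
  apply: bounded_closed_compact.
    by exists 1; split => // x x1 v /= ->; rewrite ltW.
  have -> : S = (fun v : 'rV[R]_m => `|v|) @^-1` [set x | x = 1] by [].
  apply: preimage_closed; last exact: closed_eq.
  move=> x _; exact: norm_continuous.
have hSc : compact (h @` S).
  apply: continuous_compact => //; exact: continuous_subspaceT.
have hScl : closed (h @` S) by apply: compact_closed.
have n0 : ~ (h @` S) 0.
  case=> v Sv hv0; move: Sv; rewrite /S /=.
  have : v^T = 0 by apply: h0.
  by move/(congr1 trmx); rewrite trmxK linear0 => ->; rewrite normr0 => /eqP; rewrite eq_sym oner_eq0.
have op : open (~` (h @` S)) by rewrite openC.
move: op; rewrite openE => /(_ 0 n0) /nbhs_ballP [e e0 He].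
exists e^-1; split; first by rewrite invr_gt0.
move=> u c.
have [v0|vn0] := eqVneq (u^T) 0.
  have -> : u = 0 by rewrite -(trmxK u) v0 linear0.
  by rewrite mxE normr0 nu0 // mulr0.
have vp : 0 < `|u^T| by rewrite normr_gt0.
have Sw : S (`|u^T|^-1 *: u^T).
  by rewrite /S /= normrZ normrV ?unitfE ?normr_eq0 // normr_id mulVf // normr_eq0.
have he : e <= h (`|u^T|^-1 *: u^T).
  rewrite leNgt; apply/negP => hlt.
  apply: (He (h (`|u^T|^-1 *: u^T))); last by exists (`|u^T|^-1 *: u^T).
  by rewrite -ball_normE /ball_ /= sub0r normrN ger0_norm ?nu_ge0.
move: he; rewrite /h linearZ /= trmxK hZ ger0_norm ?invr_ge0 // => he.
have he' : e * `|u^T| <= nu u.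
  by move: he; rewrite -(ler_pM2r vp) [X in _ <= X]mulrC mulrA mulfV ?mul1r // gt_eqF.
have hle : `|u c 0| <= `|u^T| by have := @entry_le_norm _ _ _ (u^T) 0 c; rewrite mxE.
apply: (le_trans hle); rewrite -(ler_pM2l e0) mulrA mulfV ?mul1r ?gt_eqF //.
Qed.
End S2.

Unset Implicit Arguments.

Lemma nrm_ext_norm (R : realType) n (nrm : 'cV[R]_n -> R) :
  is_norm nrm -> is_norm (nrm_ext nrm).
Proof.
move=> Hn; have [h0 hZ hD] := Hn; rewrite /nrm_ext; split.
- move=> w /eqP; rewrite eq_le ge_max => /andP[/andP[h1 h2] _].
  have u0 : usubmx w = 0 by apply: h0; apply/eqP; rewrite eq_le h1 nu_ge0.
  have d0 : dsubmx w = 0.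
    apply/matrixP => a b; rewrite !ord1 [RHS]mxE.
    by apply/eqP; rewrite -normr_eq0 eq_le h2 normr_ge0.
  by rewrite -(vsubmxK w) u0 d0; apply/matrixP => a b; rewrite !mxE; case: splitP => ? ?; rewrite mxE.
- move=> a w; rewrite !linearZ /= hZ mxE normrM maxr_pMr //.
- move=> u v; rewrite !linearD /= mxE.
  rewrite ge_max; apply/andP; split.
    apply: le_trans (hD _ _) _; apply: lerD; rewrite le_max lexx //.
  apply: le_trans (ler_normD _ _) _; apply: lerD; rewrite le_max lexx ?orbT //.
Qed.

Lemma abs00_norm (R : realType) : is_norm (fun v : 'cV[R]_1 => `|v 0 0|).
Proof.
split.
- move=> v /eqP; rewrite normr_eq0 => /eqP h; apply/matrixP => a b.
  by rewrite !ord1 h mxE.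
- by move=> a u; rewrite mxE normrM.
- by move=> u v; rewrite mxE ler_normD.
Qed.

Section Lin.
Variable R : realType.
Variables m p : nat.
Variable nu : 'cV[R]_m -> R.
Variable ny : 'cV[R]_p -> R.
Hypothesis Hnu : is_norm nu.
Hypothesis Hny : is_norm ny.

Lemma lin_bound (A : 'M[R]_(p, m)) :
  exists M, 0 <= M /\ forall u, ny (A *m u) <= M * nu u.
Proof.
have [K [K0 HK]] := nu_lower Hnu.
have [_ hZ _] := Hny.
exists (K * \sum_(c < m) ny (A *m delta_mx c 0)); split.
  apply: mulr_ge0; first exact: ltW.
  by apply: sumr_ge0 => c _; apply: nu_ge0.
move=> u; rewrite {1}(vec_expand _ u) mulmx_sumr.
apply: le_trans; first exact: nu_sum.
rewrite mulrAC big_distrr /=; apply: ler_sum => c _.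
rewrite -scalemxAr hZ ler_wpM2r //; first exact: nu_ge0.
Qed.

Lemma sup_hom (f : 'cV[R]_m -> R) M : 0 <= M ->
  (forall a x, f (a *: x) = `|a| * f x) -> (forall x, f x <= M * nu x) ->
  0 <= sup [set f u | u in [set u | nu u <= 1]] /\
  forall x, f x <= sup [set f u | u in [set u | nu u <= 1]] * nu x.
Proof.
move=> M0 fZ fM.
have [h0 hZ _] := Hnu.
have f0 : f 0 = 0 by rewrite -(scale0r 0) fZ normr0 mul0r.
set E := [set f u | u in _].
have ub : has_ubound E.
  exists M; rewrite /ubound /= => _ [u u1 <-]; apply: le_trans (fM u) _.
  by rewrite -{2}(mulr1 M) ler_wpM2l.
have E0 : E 0 by exists 0 => //=; rewrite (nu0 Hnu).
have s0 : 0 <= sup E by exact: (ub_le_sup ub E0).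
split => // x.
have [x0|xn0] := eqVneq x 0; first by rewrite x0 f0 (nu0 Hnu) mulr0.
have nx : 0 < nu x by rewrite lt_def nu_ge0 // andbT nu_eq0.
have nw : nu ((nu x)^-1 *: x) = 1 by rewrite hZ gtr0_norm ?invr_gt0 // mulVf ?gt_eqF.
have xw : x = nu x *: ((nu x)^-1 *: x) by rewrite scalerA mulfV ?gt_eqF // scale1r.
rewrite {1}xw fZ gtr0_norm // mulrC ler_pM2r //.
apply: (ub_le_sup ub); exists ((nu x)^-1 *: x) => //=; by rewrite nw.
Qed.
End Lin.

Set Implicit Arguments.

Set Implicit Arguments.
Definition upd (T : Type) (i : nat) (xs : 'I_i -> T) (k : 'I_i) (w : T) :=
  fun j => if j == k then w else xs j.

Lemma updK (T : Type) (i : nat) (xs : 'I_i -> T) k : upd xs k (xs k) = xs.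
Proof. by apply: funext => j; rewrite /upd; case: eqVneq => // ->. Qed.

Section ML.
Variable R : realType.
Variables k p i : nat.
Variable nx : 'cV[R]_k -> R.
Variable ny : 'cV[R]_p -> R.
Hypothesis Hnx : is_norm nx.
Hypothesis Hny : is_norm ny.
Variable b : ('I_i -> 'cV[R]_k) -> 'cV[R]_p.
Hypothesis Hb : multilinear b.

Lemma ML0 xs j : b (upd xs j 0) = 0.
Proof.
have h : b (upd xs j 0) = b (upd xs j 0) + b (upd xs j 0).
  by have := Hb xs j 1 0 0; rewrite !scale1r addr0.
by apply: (addrI (b (upd xs j 0))); rewrite addr0 -h.
Qed.

Lemma MLZ xs j a u : b (upd xs j (a *: u)) = a *: b (upd xs j u).
Proof.
have h : b (upd xs j (a *: u)) = a *: b (upd xs j u) + b (upd xs j 0).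
  by have := Hb xs j a u 0; rewrite addr0.
by rewrite h ML0 addr0.
Qed.

Lemma MLsum (I : Type) (r : seq I) (a : I -> R) (v : I -> 'cV[R]_k) xs j :
  b (upd xs j (\sum_(c <- r) a c *: v c)) = \sum_(c <- r) a c *: b (upd xs j (v c)).
Proof.
elim: r => [|c r IH]; first by rewrite !big_nil ML0.
by rewrite !big_cons -IH /upd Hb.
Qed.

Lemma MLbnd : exists Mb, forall xs, (forall j, nx (xs j) <= 1) -> ny (b xs) <= Mb.
Proof.
have [Kx [Kx0 HK]] := nu_lower Hnx.
have [_ hZ _] := Hny.
suff: forall s, (s <= i)%N -> exists M, 0 <= M /\ forall xs,
    (forall j : 'I_i, (j < s)%N -> nx (xs j) <= 1) ->
    (forall j : 'I_i, (s <= j)%N -> exists c, xs j = delta_mx c 0) -> ny (b xs) <= M.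
  move=> /(_ i (leqnn i)) [M [_ HM]]; exists M => xs H; apply: HM => j.
    by move=> _; apply: H.
  by rewrite leqNgt ltn_ord.
elim=> [_|s IH si].
  exists (\sum_(f : {ffun 'I_i -> 'I_k}) ny (b (fun j => delta_mx (f j) 0))); split.
    by apply: sumr_ge0 => f _; apply: nu_ge0.
  move=> xs _ H.
  have Hc : forall j, {c | xs j = delta_mx c 0} by move=> j; apply: cid; apply: H.
  pose f := [ffun j => projT1 (Hc j)].
  have -> : xs = (fun j => delta_mx (f j) 0).
    by apply: funext => j; rewrite ffunE; case: (Hc j).
  by rewrite (bigD1 f) //= lerDl; apply: sumr_ge0 => g _; apply: nu_ge0.
have [M [M0 HM]] := IH (ltnW si).
exists (\sum_(c < k) Kx * M); split.
  by apply: sumr_ge0 => c _; apply: mulr_ge0 => //; apply: ltW.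
move=> xs H1 H2.
pose k0 : 'I_i := Ordinal si.
rewrite -(updK xs k0) (vec_expand _ (xs k0)) MLsum.
apply: le_trans; first exact: nu_sum.
apply: ler_sum => c _; rewrite hZ.
have hb : ny (b (upd xs k0 (delta_mx c 0))) <= M.
  apply: HM => j.
    move=> js; rewrite /upd.
    have -> : (j == k0) = false.
      by apply/negbTE; rewrite -val_eqE /= neq_ltn js.
    by apply: H1; apply: ltnW.
  move=> sj; rewrite /upd; case: eqVneq => [_|jk]; first by exists c.
  apply: H2; rewrite ltn_neqAle sj andbT.
  by move: jk; rewrite -val_eqE /= eq_sym.
apply: le_trans (ler_wpM2l (normr_ge0 _) hb) _.
rewrite ler_wpM2r //.
apply: le_trans (HK _ c) _.
rewrite ler_piMr //; [exact: ltW | by apply: H1 => /=].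
Qed.

Definition mln := sup [set ny (b xs) | xs in [set xs | forall j, nx (xs j) <= 1]].

Lemma mln_ub : has_ubound [set ny (b xs) | xs in [set xs | forall j, nx (xs j) <= 1]].
Proof. by have [Mb HMb] := MLbnd; exists Mb => _ [xs Hxs <-]; apply: HMb. Qed.

Lemma mln_ge0 : 0 <= mln.
Proof.
apply: le_trans (ub_le_sup mln_ub _); first exact: (nu_ge0 Hny (b (fun _ => 0))).
by exists (fun _ => 0) => //= j; rewrite (nu0 Hnx).
Qed.

Lemma ML_gen xs : ny (b xs) <= mln * \prod_(j < i) nx (xs j).
Proof.
have [h0 hZ _] := Hnx.
have [_ hZy _] := Hny.
suff: forall s, (s <= i)%N -> forall xs, (forall j : 'I_i, (s <= j)%N -> nx (xs j) <= 1) ->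
    ny (b xs) <= mln * \prod_(j < i) (if (j < s)%N then nx (xs j) else 1).
  move=> /(_ i (leqnn i) xs) H.
  have := H (fun j => ltac:(by rewrite leqNgt ltn_ord)).
  by under eq_bigr => j _ do rewrite ltn_ord.
elim=> [_ ys H|s IH si ys H].
  rewrite big1 ?mulr1 //; apply: (ub_le_sup mln_ub); exists ys => //= j; exact: H.
pose k0 : 'I_i := Ordinal si.
have prodE : forall zs : 'I_i -> 'cV[R]_k,
    \prod_(j < i) (if (j < s.+1)%N then nx (zs j) else 1)
    = \prod_(j < i) (if (j < s)%N then nx (zs j) else 1) * nx (zs k0).
  move=> zs; rewrite (bigD1 k0) //= [X in _ = X * _](bigD1 k0) //= ltnSn ltnn mul1r mulrC.
  congr (_ * _); apply: eq_bigr => j jk; rewrite ltnS leq_eqVlt.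
  by move: jk; rewrite -val_eqE /= => /negbTE ->.
rewrite prodE.
have Pge0 : 0 <= \prod_(j < i) (if (j < s)%N then nx (ys j) else 1).
  by apply: prodr_ge0 => j _; case: ifP => // _; apply: nu_ge0.
have [r0|rn0] := eqVneq (nx (ys k0)) 0.
  have y0 : ys k0 = 0 by apply: h0.
  have bz : b ys = 0 by rewrite -(updK ys k0) y0 ML0.
  rewrite bz (nu0 Hny); apply: mulr_ge0; first exact: mln_ge0.
  by rewrite r0 mulr0.
have rp : 0 < nx (ys k0) by rewrite lt_def rn0 nu_ge0.
set r := nx (ys k0) in rn0 rp *.
set w := r^-1 *: ys k0.
have ye : ys k0 = r *: w by rewrite /w scalerA mulfV // scale1r.
have bx : b ys = r *: b (upd ys k0 w) by rewrite -{1}(updK ys k0) ye MLZ.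
rewrite bx hZy gtr0_norm //.
have hb := IH (ltnW si) (upd ys k0 w).
have hb' : ny (b (upd ys k0 w)) <= mln * \prod_(j < i) (if (j < s)%N then nx (ys j) else 1).
  have <- : \prod_(j < i) (if (j < s)%N then nx (upd ys k0 w j) else 1)
         = \prod_(j < i) (if (j < s)%N then nx (ys j) else 1).
    apply: eq_bigr => j _; case: ifP => // js; rewrite /upd.
    by have -> : (j == k0) = false by apply/negbTE; rewrite -val_eqE /= neq_ltn js.
  apply: hb => j sj; rewrite /upd; case: eqVneq => [_|jk].
    by rewrite /w hZ gtr0_norm ?invr_gt0 // mulVf.
  apply: H; rewrite ltn_neqAle sj andbT.
  by move: jk; rewrite -val_eqE /= eq_sym.
apply: (le_trans (ler_wpM2l (ltW rp) hb')).
by rewrite mulrCA [r * _]mulrC.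
Qed.
End ML.

Unset Implicit Arguments.

Lemma sup_scale (R : realType) (T : Type) (A : set T) (f : T -> R) (c : R) :
  0 <= c -> A !=set0 -> has_ubound (f @` A) ->
  sup [set c * f x | x in A] = c * sup (f @` A).
Proof.
move=> c0 [x0 Ax0] ub.
have ne : (f @` A) !=set0 by exists (f x0), x0.
have ne' : [set c * f x | x in A] !=set0 by exists (c * f x0), x0.
have ub' : has_ubound [set c * f x | x in A].
  case: ub => M HM; exists (c * M) => _ [x Ax <-].
  by rewrite ler_wpM2l //; apply: HM; exists x.
apply/eqP; rewrite eq_le; apply/andP; split.
  apply: ge_sup => // _ [x Ax <-]; rewrite ler_wpM2l //.
  by apply: (ub_le_sup ub); exists x.
have [ce|cn0] := eqVneq c 0.
  subst c; rewrite mul0r; have h0 : [set 0 * f x | x in A] (0 * f x0) by exists x0.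
  by have := ub_le_sup ub' h0; rewrite mul0r.
have cp : 0 < c by rewrite lt_def cn0.
rewrite -ler_pdivlMl //; apply: ge_sup => // _ [x Ax <-].
rewrite ler_pdivlMl //; apply: (ub_le_sup ub'); by exists x.
Qed.

Lemma mulB1 (R : realType) n (B : 'cV[R]_n) (y : 'cV[R]_1) : B *m y = y 0 0 *: B.
Proof. by apply/matrixP => r c; rewrite !mxE big_ord1 !ord1 mulrC. Qed.

Theorem mainTheorem6 (R : realType) (n i : nat) (nrm : 'cV[R]_n -> R)
    (F : 'cV[R]_n * R -> 'cV[R]_n) (G : 'cV[R]_n * R -> R) :
  (1 <= n)%N -> (1 <= i)%N -> is_norm nrm ->
  (* T = (F, G) maps D^* into D *)
  (forall p, Dstar nrm p -> Dset nrm (F p, G p)) ->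
  (* F, G differentiable on D^*, d_y G nonvanishing on D^* *)
  (forall p, Dstar nrm p -> differentiable F p /\ differentiable G p) ->
  (forall p, Dstar nrm p -> dyG G p != 0) ->
  (* ||A||_D, ||B||_D, ||C||_D finite *)
  finiteD nrm (fun p => opnorm_sq nrm (Amat F G p)) ->
  finiteD nrm (fun p => nrm (Bvec F G p)) ->
  finiteD nrm (fun p => opnorm_row nrm (Crow G p)) ->
  let nA := supD nrm (fun p => opnorm_sq nrm (Amat F G p)) in
  let nB := supD nrm (fun p => nrm (Bvec F G p)) in
  let nC := supD nrm (fun p => opnorm_row nrm (Crow G p)) in
  exists N : (('I_i -> 'cV[R]_(n + 1)) -> 'cV[R]_n) -> R,
    (* N is a norm on L^i(R^{n+1}, R^n) *)
    [/\ forall b, multilinear b -> N b = 0 -> b = (fun _ => 0),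
        forall (a : R) b, multilinear b -> N (fun xs => a *: b xs) = `|a| * N b &
        forall b1 b2, multilinear b1 -> multilinear b2 ->
          N (fun xs => b1 xs + b2 xs) <= N b1 + N b2] /\
    (* N is equivalent to the operator norm *)
    (exists c1 c2 : R, 0 < c1 /\ 0 < c2 /\
       forall b, multilinear b ->
         c1 * mlnorm nrm b <= N b /\ N b <= c2 * mlnorm nrm b) /\
    (* the contraction estimate *)
    (forall p, Dstar nrm p ->
       forall b, multilinear b -> b <> (fun _ => 0) ->
         N (Mi F G p b) / N b
           <= \big[Num.max/0]_(m < i.+1) ((nA + nB) ^+ m * (nC + 1) ^+ (i - m))).
Proof.
move=> n1 i1 Hn HT Hdiff Hdy fA fB fC nA nB nC.
have Hx := @nrm_ext_norm R n nrm Hn.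
have [h0 hZ hD] := Hn.
pose Ball := [set xs : 'I_i -> 'cV[R]_(n + 1) | forall k, nrm_ext nrm (xs k) <= 1].
have Ball0 : Ball (fun _ => 0) by move=> k; rewrite (nu0 Hx).
have defin : forall b : ('I_i -> 'cV[R]_(n + 1)) -> 'cV[R]_n, multilinear b -> mlnorm nrm b = 0 -> b = (fun _ => 0).
  move=> b Hb h; apply: boolp.funext => xs.
  have := ML_gen Hx Hn Hb xs.
  have -> : mln R (nrm_ext nrm) nrm b = mlnorm nrm b by [].
  rewrite h mul0r => hle.
  by apply: h0; apply/eqP; rewrite eq_le hle nu_ge0.
exists (mlnorm nrm); split; [split|split].
- exact: defin.
- move=> a b Hb; rewrite /mlnorm.
  under eq_imagel do rewrite hZ.
  apply: sup_scale => //; first by exists (fun _ => 0).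
  exact: mln_ub Hx Hn b Hb.
- move=> b1 b2 Hb1 Hb2; rewrite /mlnorm.
  apply: ge_sup; first by exists (nrm (b1 (fun _ => 0) + b2 (fun _ => 0))), (fun _ => 0).
  move=> _ [xs Bxs <-]; apply: le_trans (hD _ _) _; apply: lerD.
    by apply: (ub_le_sup (mln_ub Hx Hn Hb1)); exists xs.
  by apply: (ub_le_sup (mln_ub Hx Hn Hb2)); exists xs.
- by exists 1, 1; split => //; split => // b Hb; rewrite !mul1r.
move=> p Dp b Hb bn0.
set A := Amat F G p; set B := Bvec F G p; set C := Crow G p.
have [MA [MA0 HMA]] := @lin_bound R n n nrm nrm Hn Hn A.
have [opA0 HA] := @sup_hom R n nrm Hn (fun u => nrm (A *m u)) MA MA0
  (fun a x => ltac:(by rewrite /= -scalemxAr hZ)) HMA.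
have [MC [MC0 HMC]] := @lin_bound R n 1 nrm _ Hn (@abs00_norm R) C.
have [opC0 HC] := @sup_hom R n nrm Hn (fun u => `|(C *m u) 0 0|) MC MC0
  (fun a x => ltac:(by rewrite /= -scalemxAr mxE normrM)) HMC.
rewrite -/(opnorm_sq nrm A) in opA0 HA.
rewrite -/(opnorm_row nrm C) in opC0 HC.
set opA := opnorm_sq nrm A in opA0 HA.
set opC := opnorm_row nrm C in opC0 HC.
have nB0 : 0 <= nrm B by apply: nu_ge0.
have opAnA : opA <= nA by apply: (ub_le_sup fA); exists p.
have nBnB : nrm B <= nB by apply: (ub_le_sup fB); exists p.
have opCnC : opC <= nC by apply: (ub_le_sup fC); exists p.
pose lam := Num.max (opA + nrm B) (opC + 1).
have lam0 : 0 <= lam by rewrite le_max; apply/orP; left; apply: addr_ge0.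
have DTb : forall w, nrm_ext nrm (DThat F G p *m w) <= lam * nrm_ext nrm w.
  move=> w; rewrite /DThat -/A -/B -/C -{1}(vsubmxK w) mul_block_col.
  rewrite /nrm_ext col_mxKu col_mxKd mul1mx mulB1.
  set x := usubmx w; set y := dsubmx w 0 0; set ex := Num.max (nrm x) `|y|.
  have -> : (C *m x + dsubmx w) 0 0 = (C *m x) 0 0 + y by rewrite mxE.
  have hx : nrm x <= ex by rewrite le_max lexx.
  have hy : `|y| <= ex by rewrite le_max lexx orbT.
  have ex0 : 0 <= ex by apply: le_trans hy.
  rewrite ge_max; apply/andP; split.
    apply: le_trans; first exact: hD.
    rewrite hZ.
    apply: (@le_trans _ _ ((opA + nrm B) * ex)); last first.
      by apply: ler_wpM2r => //; rewrite le_max lexx.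
    rewrite mulrDl; apply: lerD.
      by apply: le_trans (HA x) _; apply: ler_wpM2l.
    by rewrite mulrC; apply: ler_wpM2l.
  apply: le_trans; first exact: ler_normD.
  apply: (@le_trans _ _ ((opC + 1) * ex)); last first.
    by apply: ler_wpM2r => //; rewrite le_max lexx orbT.
  rewrite mulrDl mul1r; apply: lerD => //.
  by apply: le_trans (HC x) _; apply: ler_wpM2l.
have bp : 0 < mlnorm nrm b.
  rewrite lt_def (mln_ge0 Hx Hn Hb) andbT; apply/eqP => h.
  by apply: bn0; apply: defin.
have Mib : mlnorm nrm (Mi F G p b) <= mlnorm nrm b * lam ^+ i.
  rewrite /mlnorm; apply: ge_sup; first by exists (nrm (Mi F G p b (fun _ => 0))), (fun _ => 0).
  move=> _ [xs Bxs <-]; rewrite /Mi.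
  apply: le_trans; first exact: (ML_gen Hx Hn Hb).
  have -> : mln R (nrm_ext nrm) nrm b = mlnorm nrm b by [].
  apply: ler_wpM2l; first exact: ltW.
  have -> : lam ^+ i = \prod_(j < i) lam by rewrite prodr_const card_ord.
  apply: ler_prod => k _; apply/andP; split; first exact: nu_ge0.
  apply: le_trans (DTb _) _.
  by rewrite -[X in _ <= X]mulr1 ler_wpM2l.
apply: (@le_trans _ _ (lam ^+ i)).
  by rewrite ler_pdivrMr // mulrC.
pose Lam := Num.max (nA + nB) (nC + 1).
have laml : lam <= Lam.
  rewrite /lam /Lam ge_max !le_max; apply/andP; split; apply/orP.
    by left; apply: lerD.
  by right; apply: lerD.
apply: (@le_trans _ _ (Lam ^+ i)).
  by apply: lerXn2r => //; rewrite nnegrE //; apply: le_trans laml.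
have [h|h] := leP (nA + nB) (nC + 1).
  rewrite /Lam (max_r h).
  apply: (@le_trans _ _ ((nA + nB) ^+ (@ord0 i) * (nC + 1) ^+ (i - @ord0 i))).
    by rewrite /= expr0 mul1r subn0.
  exact: (le_bigmax 0 (fun m : 'I_i.+1 => (nA + nB) ^+ m * (nC + 1) ^+ (i - m)) ord0).
rewrite /Lam (max_l (ltW h)).
apply: (@le_trans _ _ ((nA + nB) ^+ (@ord_max i) * (nC + 1) ^+ (i - @ord_max i))).
  by rewrite /= subnn expr0 mulr1.
exact: (le_bigmax 0 (fun m : 'I_i.+1 => (nA + nB) ^+ m * (nC + 1) ^+ (i - m)) ord_max).
Qed.
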